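(* Let $\mathcal H$ be an infinite-dimensional complex Hilbert space and let $\mathbf A=(A_1,\dots,A_m)$ be an $m$-tuple of bounded self-adjoint operators on $\mathcal H$. Then $\Lambda_k(\mathbf A)$ is star-shaped for each positive integer $k$. Moreover, if $\mathbf a\in\Lambda_\infty(\mathbf A)$, then $\mathbf a$ is a star center of $\Lambda_k(\mathbf A)$ for every positive integer $k$.
   Context: For a positive integer $k$, $\Lambda_k(\mathbf A)=\{(a_1,\dots,a_m)\in\mathbb R^m:$ there is an orthogonal projection $P$ of rank $k$ on $\mathcal H$ with $PA_jP=a_jP$ for $j=1,\dots,m\}$, and $\Lambda_\infty(\mathbf A)$ is defined the same way with $P$ ranging over orthogonal projections of infinite rank. A set $S\subseteq\mathbb R^m$ is star-shaped with star center $\mathbf c\in S$ if for every $\mathbf b\in S$ the segment joining $\mathbf c$ and $\mathbf b$ lies in $S$. *)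

(* Defs.v *)
From HB Require Import structures.
From mathcomp Require Import all_boot all_order all_algebra.
From mathcomp Require Import complex.
From mathcomp Require Import all_classical all_reals.
Set Implicit Arguments. Unset Strict Implicit. Unset Printing Implicit Defensive.
Import Order.TTheory GRing.Theory Num.Theory.
Local Open Scope ring_scope.
Local Open Scope classical_set_scope.

Section Hilbert.
Variables (R : realType) (H : lmodType R[i]) (ip : H -> H -> R[i]).

Definition is_inner_product : Prop :=
  [/\ (forall (c : R[i]) (x y z : H), ip (c *: x + y) z = c * ip x z + ip y z),
      (forall x y : H, ip y x = conjc (ip x y)),
      (forall x : H, @complex.Im R (ip x x) = 0 /\ 0 <= @complex.Re R (ip x x)) &
      (forall x : H, ip x x = 0 -> x = 0)].

Definition hnorm (x : H) : R := Num.sqrt (@complex.Re R (ip x x)).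

Definition hcauchy (u : nat -> H) : Prop :=
  forall eps : R, 0 < eps -> exists N : nat, forall m n : nat,
    (N <= m)%N -> (N <= n)%N -> hnorm (u m - u n) < eps.

Definition hconverges (u : nat -> H) : Prop :=
  exists l : H, forall eps : R, 0 < eps -> exists N : nat, forall n : nat,
    (N <= n)%N -> hnorm (u n - l) < eps.

Definition complex_hilbert_space : Prop :=
  is_inner_product /\ forall u : nat -> H, hcauchy u -> hconverges u.

Definition lin_indep (n : nat) (v : 'I_n -> H) : Prop :=
  forall c : 'I_n -> R[i], \sum_(i < n) c i *: v i = 0 -> forall i, c i = 0.

Definition infinite_dimensional : Prop :=
  forall n : nat, exists v : 'I_n -> H, lin_indep v.

Definition is_linear_op (T : H -> H) : Prop :=
  forall (c : R[i]) (x y : H), T (c *: x + y) = c *: T x + T y.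

Definition bounded_op (T : H -> H) : Prop :=
  is_linear_op T /\ exists C : R, forall x : H, hnorm (T x) <= C * hnorm x.

Definition self_adjoint (T : H -> H) : Prop :=
  forall x y : H, ip (T x) y = ip x (T y).

Definition bounded_self_adjoint (T : H -> H) : Prop :=
  bounded_op T /\ self_adjoint T.

Definition orth_projection (P : H -> H) : Prop :=
  bounded_self_adjoint P /\ forall x : H, P (P x) = P x.

Definition has_rank (P : H -> H) (k : nat) : Prop :=
  exists v : 'I_k -> H,
    [/\ lin_indep v, (forall i, exists y, v i = P y) &
        (forall x : H, exists c : 'I_k -> R[i], P x = \sum_(i < k) c i *: v i)].

Definition infinite_rank (P : H -> H) : Prop :=
  forall n : nat, exists v : 'I_n -> H,
    lin_indep v /\ forall i, exists y, v i = P y.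

Definition compresses_to (m : nat) (A : 'I_m -> H -> H) (P : H -> H)
  (a : 'I_m -> R) : Prop :=
  forall (j : 'I_m) (x : H), P (A j (P x)) = (a j)%:C%C *: P x.

Definition Lambda_k (m : nat) (A : 'I_m -> H -> H) (k : nat)
  : set ('I_m -> R) :=
  [set a | exists P : H -> H, [/\ orth_projection P, has_rank P k &
                                  compresses_to A P a]].

Definition Lambda_inf (m : nat) (A : 'I_m -> H -> H) : set ('I_m -> R) :=
  [set a | exists P : H -> H, [/\ orth_projection P, infinite_rank P &
                                  compresses_to A P a]].
End Hilbert.

Definition star_center (R : realType) (m : nat) (S : set ('I_m -> R))
  (c : 'I_m -> R) : Prop :=
  S c /\ forall b, S b -> forall t : R, 0 <= t <= 1 ->
    S (fun j => (1 - t) * c j + t * b j).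

Definition star_shaped (R : realType) (m : nat) (S : set ('I_m -> R)) : Prop :=
  exists c, star_center S c.

(* Main.v *)
Require Import Defs.
From HB Require Import structures.
From mathcomp Require Import all_boot all_order all_algebra.
From mathcomp Require Import complex.
From mathcomp Require Import all_classical all_reals.
From mathcomp Require Import ring lra zify.
Set Implicit Arguments. Unset Strict Implicit. Unset Printing Implicit Defensive.
Import Order.TTheory GRing.Theory Num.Theory.
Local Open Scope ring_scope.
Local Open Scope classical_set_scope.
Local Open Scope complex_scope.


Section IP.
Variables (R : realType) (H : lmodType R[i]) (ip : H -> H -> R[i]).
Hypothesis hip : is_inner_product ip.

Lemma ipCl c x y z : ip (c *: x + y) z = c * ip x z + ip y z.
Proof. by case: hip. Qed.
Lemma ipJ x y : ip y x = conjc (ip x y).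
Proof. by case: hip. Qed.
Lemma ip0l z : ip 0 z = 0.
Proof.
have := ipCl 1 0 0 z; rewrite scaler0 addr0 mul1r => h.
by apply: (@addrI _ (ip 0 z)); rewrite addr0 -h.
Qed.
Lemma ipDl x y z : ip (x + y) z = ip x z + ip y z.
Proof. by rewrite -[x]scale1r ipCl mul1r scale1r. Qed.
Lemma ipZl c x z : ip (c *: x) z = c * ip x z.
Proof. by rewrite -[c *: x]addr0 ipCl ip0l addr0. Qed.
Lemma ipNl x z : ip (- x) z = - ip x z.
Proof. by rewrite -scaleN1r ipZl mulN1r. Qed.
Lemma ipBl x y z : ip (x - y) z = ip x z - ip y z.
Proof. by rewrite ipDl ipNl. Qed.
Lemma ip_suml (I : Type) (r : seq I) (P : pred I) (F : I -> H) z :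
  ip (\sum_(i <- r | P i) F i) z = \sum_(i <- r | P i) ip (F i) z.
Proof.
elim/big_rec2: _ => [|i y1 y2 _ <-]; first exact: ip0l.
by rewrite ipDl.
Qed.
Lemma ip0r z : ip z 0 = 0.
Proof. by rewrite ipJ ip0l conjc0. Qed.
Lemma ipDr x y z : ip z (x + y) = ip z x + ip z y.
Proof. by rewrite [LHS]ipJ [ip z x]ipJ [ip z y]ipJ ipDl rmorphD. Qed.
Lemma ipZr c x z : ip z (c *: x) = conjc c * ip z x.
Proof. by rewrite [LHS]ipJ [ip z x]ipJ ipZl rmorphM. Qed.
Lemma ipNr x z : ip z (- x) = - ip z x.
Proof. by rewrite [LHS]ipJ [ip z x]ipJ ipNl rmorphN. Qed.
Lemma ipBr x y z : ip z (x - y) = ip z x - ip z y.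
Proof. by rewrite ipDr ipNr. Qed.
Lemma ip_sumr (I : Type) (r : seq I) (P : pred I) (F : I -> H) z :
  ip z (\sum_(i <- r | P i) F i) = \sum_(i <- r | P i) ip z (F i).
Proof.
elim/big_rec2: _ => [|i y1 y2 _ <-]; first exact: ip0r.
by rewrite ipDr.
Qed.
Lemma ipZr_real (c : R) x z : ip z (c%:C *: x) = c%:C * ip z x.
Proof. by rewrite ipZr conjc_real. Qed.
Lemma ip_self_real x : ip x x = (complex.Re (ip x x))%:C.
Proof.
case: hip => _ _ h _; case: (h x) => hI _.
by rewrite [LHS]complexE hI mulr0 addr0.
Qed.
Lemma ip_self_ge0 x : 0 <= complex.Re (ip x x).
Proof. case: hip => _ _ h _; by case: (h x). Qed.
Lemma ip_self_eq0 x : ip x x = 0 -> x = 0.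
Proof. by case: hip => _ _ _; apply. Qed.
End IP.

Require Import Defs.
From HB Require Import structures.
From mathcomp Require Import all_boot all_order all_algebra.
From mathcomp Require Import complex.
From mathcomp Require Import all_classical all_reals.
From mathcomp Require Import ring lra zify.
Set Implicit Arguments. Unset Strict Implicit. Unset Printing Implicit Defensive.
Import Order.TTheory GRing.Theory Num.Theory.
Local Open Scope ring_scope.
Local Open Scope classical_set_scope.
Local Open Scope complex_scope.
Section Proj.
Variables (R : realType) (H : lmodType R[i]) (ip : H -> H -> R[i]).
Hypothesis hip : is_inner_product ip.

Lemma sum_delta k (F : 'I_k -> R[i]) (t : 'I_k) :
  \sum_(s < k) F s * ((s : nat) == t)%:R = F t.
Proof.
rewrite (bigD1 t) //= eqxx mulr1 big1 ?addr0 // => s hs.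
have -> : ((s : nat) == t) = false by apply/negbTE.
by rewrite mulr0.
Qed.

Lemma sumv_delta k (F : 'I_k -> H) (t : 'I_k) :
  \sum_(s < k) ((t : nat) == s)%:R *: F s = F t.
Proof.
rewrite (bigD1 t) //= eqxx scale1r big1 ?addr0 // => s hs.
have -> : ((t : nat) == s) = false by apply/negbTE; rewrite eq_sym.
by rewrite scale0r.
Qed.

Lemma lin0 (T : H -> H) : is_linear_op T -> T 0 = 0.
Proof.
move=> hT; have := hT 1 0 0; rewrite scaler0 addr0 scale1r => h.
by apply: (@addrI _ (T 0)); rewrite addr0 -h.
Qed.
Lemma linD (T : H -> H) x y : is_linear_op T -> T (x + y) = T x + T y.
Proof. move=> hT; have := hT 1 x y; rewrite scale1r => ->; by rewrite scale1r. Qed.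
Lemma linZ (T : H -> H) c x : is_linear_op T -> T (c *: x) = c *: T x.
Proof. by move=> hT; rewrite -[c *: x]addr0 (hT c x 0) lin0 // addr0. Qed.
Lemma lin_sum (T : H -> H) (I : Type) (r : seq I) (P : pred I) (F : I -> H) :
  is_linear_op T -> T (\sum_(i <- r | P i) F i) = \sum_(i <- r | P i) T (F i).
Proof.
move=> hT; elim/big_rec2: _ => [|i y1 y2 _ <-]; first exact: lin0.
by rewrite linD.
Qed.
Lemma linB (T : H -> H) x y : is_linear_op T -> T (x - y) = T x - T y.
Proof. by move=> hT; rewrite linD // -scaleN1r linZ // scaleN1r. Qed.

Variables (m : nat) (A : 'I_m -> H -> H).
Hypothesis hA : forall j : 'I_m, bounded_self_adjoint ip (A j).

Lemma A_lin j : is_linear_op (A j).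
Proof. by case: (hA j) => [[]]. Qed.
Lemma A_sa j x y : ip (A j x) y = ip x (A j y).
Proof. by case: (hA j). Qed.

Definition projF (k : nat) (y : nat -> H) (x : H) := \sum_(s < k) ip x (y s) *: y s.

Section PL.
Variables (k : nat) (y : nat -> H) (c : 'I_m -> R).
Hypothesis hy : forall s t, (s < k)%N -> (t < k)%N -> ip (y s) (y t) = (s == t)%:R.
Hypothesis hAy : forall j s t, (s < k)%N -> (t < k)%N ->
  ip (A j (y s)) (y t) = (s == t)%:R * (c j)%:C.

Local Notation P := (projF k y).

Let hyo (s t : 'I_k) : ip (y s) (y t) = ((s : nat) == t)%:R.
Proof. exact: hy. Qed.

Lemma P_ip x (t : 'I_k) : ip (P x) (y t) = ip x (y t).
Proof.
rewrite /projF ip_suml //; under eq_bigr => s _ do rewrite ipZl // hyo.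
exact: sum_delta.
Qed.

Lemma P_lin : is_linear_op P.
Proof.
move=> a x z; rewrite /projF scaler_sumr -big_split /=; apply: eq_bigr => s _.
by rewrite ipCl // scalerDl scalerA.
Qed.

Lemma P_sa : self_adjoint ip P.
Proof.
move=> x z; rewrite /projF ip_suml // ip_sumr //; apply: eq_bigr => s _.
by rewrite ipZl // ipZr // -ipJ // mulrC.
Qed.

Lemma P_idem x : P (P x) = P x.
Proof. by rewrite {1}/projF; apply: eq_bigr => s _; rewrite P_ip. Qed.

Lemma P_perp x (t : 'I_k) : ip (x - P x) (y t) = 0.
Proof. by rewrite ipBl // P_ip subrr. Qed.

Lemma P_perp2 x : ip (x - P x) (P x) = 0.
Proof.
rewrite /projF ip_sumr //; apply: big1 => s _.
by rewrite ipZr // P_perp mulr0.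
Qed.

Lemma P_bounded x : hnorm ip (P x) <= 1 * hnorm ip x.
Proof.
rewrite mul1r /hnorm; apply: ler_wsqrtr.
set u := P x; set v := x - u.
have e : x = u + v by rewrite /v addrC subrK.
have hx : ip x x = ip u u + ip v v.
  rewrite {1 2}e (ipDl hip u v) (ipDr hip u v u) (ipDr hip u v v).
  rewrite /v /u P_perp2 [ip (P x) (x - P x)](ipJ hip) P_perp2.
  by rewrite conjc0 add0r addr0.
rewrite hx raddfD /= lerDl; exact: ip_self_ge0.
Qed.

Lemma P_rank : has_rank P k.
Proof.
exists (fun i : 'I_k => y i); split.
- move=> a ha i; have := congr1 (fun v => ip v (y i)) ha.
  rewrite /= ip_suml // ip0l //; under eq_bigr => s _ do rewrite ipZl // hyo.
  by rewrite sum_delta.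
- move=> i; exists (y i); rewrite /projF; under eq_bigr => s _ do rewrite hyo.
  by rewrite sumv_delta.
- by move=> x; exists (fun i => ip x (y i)).
Qed.

Lemma P_comp : compresses_to A P c.
Proof.
move=> j x; rewrite {1}/projF /projF scaler_sumr; apply: eq_bigr => t _.
rewrite scalerA; congr (_ *: _).
have hl := A_lin j.
rewrite (lin_sum _ _ _ hl) (ip_suml hip).
under eq_bigr => s _ do rewrite (linZ _ _ hl) (ipZl hip) (hAy j (ltn_ord s) (ltn_ord t)).
under eq_bigr => s _ do rewrite mulrA.
by rewrite -mulr_suml (sum_delta (fun s : 'I_k => ip x (y s))) mulrC.
Qed.

Lemma proj_lambda : Lambda_k ip A k c.
Proof.
exists P; split; last exact: P_comp; last exact: P_rank.
split; last exact: P_idem.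
split; last exact: P_sa.
split; first exact: P_lin.
by exists 1; exact: P_bounded.
Qed.
End PL.
End Proj.


Lemma kernel_exists (F : fieldType) (N r : nat) (M : 'M[F]_(N, r)) :
  (r < N)%N -> exists c : 'I_N -> F, (exists i, c i != 0) /\
    forall j, \sum_(i < N) c i * M i j = 0.
Proof.
move=> hrN.
have hk : kermx M != 0.
  rewrite -mxrank_eq0 mxrank_ker -lt0n subn_gt0.
  exact: leq_ltn_trans (rank_leq_col M) hrN.
have [i0 [j0 hij]] : exists i0 j0, kermx M i0 j0 != 0.
  apply: contrapT => hn; move/eqP: hk; apply; apply/matrixP => i j; rewrite [RHS]mxE.
  apply/eqP/negPn/negP => h; apply: hn; exists i, j; exact h.
set v := row i0 (kermx M).
have hv : v *m M = 0 by apply/eqP; rewrite -sub_kermx row_sub.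
exists (fun i => v 0 i); split; first by exists j0; rewrite /v mxE.
move=> j; have := congr1 (fun A : 'M[F]_(1, r) => A 0 j) hv; rewrite /= !mxE; exact.
Qed.

Section Perp.
Variables (R : realType) (H : lmodType R[i]) (ip : H -> H -> R[i]).
Hypothesis hip : is_inner_product ip.

Lemma perp_exists (N : nat) (v : 'I_N -> H) (F : seq H) :
  lin_indep v -> (size F < N)%N ->
  exists c : 'I_N -> R[i], \sum_(i < N) c i *: v i != 0 /\
    forall w, w \in F -> ip (\sum_(i < N) c i *: v i) w = 0.
Proof.
move=> hv hF.
have [c [[i0 hi0] hc]] := kernel_exists (\matrix_(i < N, j < size F) ip (v i) (nth 0 F j)) hF.
exists c; split.
  by apply/eqP => h; move/eqP: hi0; apply; exact: (hv c h i0).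
move=> w hw; rewrite (ip_suml hip).
have hiw : (index w F < size F)%N by rewrite index_mem.
apply: etrans (hc (Ordinal hiw)); apply: eq_bigr => i _.
by rewrite (ipZl hip) mxE /= (nth_index 0 hw).
Qed.

Lemma normalize x (F : seq H) : x != 0 -> (forall w, w \in F -> ip x w = 0) ->
  exists a : R, ip (a%:C *: x) (a%:C *: x) = 1 /\
    forall w, w \in F -> ip (a%:C *: x) w = 0.
Proof.
move=> hx hF.
set r := complex.Re (ip x x).
have hr0 : 0 <= r by exact: ip_self_ge0.
have hr : r != 0.
  apply/eqP => h; move/eqP: hx; apply; apply: (ip_self_eq0 hip).
  by rewrite (ip_self_real hip) -/r h.
have hs : Num.sqrt r != 0 by rewrite sqrtr_eq0 -ltNge lt_def hr hr0.
exists (Num.sqrt r)^-1; split; last by move=> w hw; rewrite (ipZl hip) hF // mulr0.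
rewrite (ipZl hip) (ipZr_real hip) (ip_self_real hip) -/r -!rmorphM /=.
apply/eqP; rewrite eq_complex /= eqxx andbT.
apply/eqP; rewrite mulrA -expr2 exprVn sqr_sqrtr // mulVf //.
Qed.

Lemma unit_perp (N : nat) (v : 'I_N -> H) (F : seq H) :
  lin_indep v -> (size F < N)%N ->
  exists c : 'I_N -> R[i], ip (\sum_(i < N) c i *: v i) (\sum_(i < N) c i *: v i) = 1 /\
    forall w, w \in F -> ip (\sum_(i < N) c i *: v i) w = 0.
Proof.
move=> hv hF; have [c [hc0 hc]] := perp_exists hv hF.
have [a [ha1 ha2]] := normalize hc0 hc.
exists (fun i => a%:C * c i).
have -> : \sum_(i < N) (a%:C * c i) *: v i = a%:C *: \sum_(i < N) c i *: v i.
  by rewrite scaler_sumr; apply: eq_bigr => i _; rewrite scalerA.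
by split.
Qed.
End Perp.


Section Frame.
Variables (R : realType) (H : lmodType R[i]) (ip : H -> H -> R[i]).
Hypothesis hip : is_inner_product ip.
Variables (m : nat) (A : 'I_m -> H -> H).
Hypothesis hA : forall j : 'I_m, bounded_self_adjoint ip (A j).

Definition avoidset (avoidA : bool) (F : seq H) (x : nat -> H) (n : nat) : seq H :=
  F ++ [seq x t | t <- iota 0 n] ++
  (if avoidA then [seq A j (x t) | t <- iota 0 n, j <- enum 'I_m] else [::]).

Lemma avoid_size avoidA F x n :
  size (avoidset avoidA F x n) = (size F + n * (if avoidA then m.+1 else 1))%N.
Proof.
rewrite /avoidset !size_cat size_map size_iota; case: avoidA.
  by rewrite size_allpairs size_iota size_enum_ord mulnS addnA.
by rewrite muln1 addn0.
Qed.

Lemma avoid_memF avoidA F x n w : w \in F -> w \in avoidset avoidA F x n.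
Proof. by rewrite /avoidset mem_cat => ->. Qed.
Lemma avoid_memx avoidA F x n t : (t < n)%N -> x t \in avoidset avoidA F x n.
Proof.
move=> ht; rewrite /avoidset !mem_cat map_f ?orbT //.
by rewrite mem_iota.
Qed.
Lemma avoid_memA F x n j t : (t < n)%N -> A j (x t) \in avoidset true F x n.
Proof.
move=> ht; rewrite /avoidset !mem_cat; apply/orP; right; apply/orP; right.
by apply: (allpairs_f (fun t j => A j (x t))); rewrite ?mem_iota ?mem_enum.
Qed.

Lemma ltS_cases s k : (s < k.+1)%N -> s = k \/ (s < k)%N.
Proof. by rewrite ltnS leq_eqVlt => /orP[/eqP->|->]; [left|right]. Qed.

Lemma frame (G : H -> H) (hG : is_linear_op G) (hGi : forall x, G (G x) = G x)
  (avoidA : bool) (F : seq H) (k : nat)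
  (hv : forall n, (n < k)%N -> exists N (v : 'I_N -> H),
     [/\ lin_indep v, (forall i, exists y, v i = G y) &
         (size F + n * (if avoidA then m.+1 else 1) < N)%N]) :
  exists x : nat -> H,
   [/\ forall s t, (s < k)%N -> (t < k)%N -> ip (x s) (x t) = (s == t)%:R,
     forall s, (s < k)%N -> G (x s) = x s,
     forall s w, (s < k)%N -> w \in F -> ip (x s) w = 0 &
     avoidA -> forall j s t, (s < k)%N -> (t < k)%N -> s != t ->
        ip (x s) (A j (x t)) = 0].
Proof.
elim: k hv => [|k IH] hv; first by exists (fun _ => 0); split.
have [x [h1 h2 h3 h4]] := IH (fun n hn => hv n (leqW hn)).
have [N [v [hvi hvr hN]]] := hv k (ltnSn k).
have hsz : (size (avoidset avoidA F x k) < N)%N by rewrite avoid_size.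
have [c [hu1 hu2]] := unit_perp hip hvi hsz.
set u := \sum_(i < N) c i *: v i in hu1 hu2.
have hGu : G u = u.
  rewrite /u (lin_sum _ _ _ hG); apply: eq_bigr => i _.
  rewrite (linZ _ _ hG); have [y ->] := hvr i; by rewrite hGi.
have hux t : (t < k)%N -> ip u (x t) = 0 by move=> ht; apply: hu2; apply: avoid_memx.
have hxu t : (t < k)%N -> ip (x t) u = 0 by move=> ht; rewrite (ipJ hip) hux // conjc0.
exists (fun n => if n == k then u else x n); split.
- move=> s t; move=> /ltS_cases[->|hs] /ltS_cases[->|ht].
  + by rewrite eqxx.
  + by rewrite eqxx (ltn_eqF ht) hux // eq_sym (ltn_eqF ht).
  + by rewrite eqxx (ltn_eqF hs) hxu // (ltn_eqF hs).
  + by rewrite (ltn_eqF hs) (ltn_eqF ht) h1.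
- move=> s; move=> /ltS_cases[->|hs]; first by rewrite eqxx.
  by rewrite (ltn_eqF hs) h2.
- move=> s w; move=> /ltS_cases[->|hs] hw.
    by rewrite eqxx; apply: hu2; apply: avoid_memF.
  by rewrite (ltn_eqF hs) h3.
- move=> hav j s t; move=> /ltS_cases[->|hs] /ltS_cases[->|ht].
  + by rewrite eqxx.
  + move=> _; rewrite eqxx (ltn_eqF ht); apply: hu2.
    by rewrite hav; apply: avoid_memA.
  + move=> _; rewrite eqxx (ltn_eqF hs).
    rewrite (ipJ hip) (A_sa hA) -(ipJ hip) (ipJ hip) hu2 ?conjc0 //.
    by rewrite hav; apply: avoid_memA.
  + by rewrite (ltn_eqF hs) (ltn_eqF ht); apply: h4.
Qed.
End Frame.


Lemma RCM (R : realType) (x y : R) : x%:C * y%:C = (x * y)%:C :> R[i].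
Proof. by apply/eqP; rewrite eq_complex /= !mulr0 !mul0r subr0 addr0 !eqxx. Qed.
Lemma RCD (R : realType) (x y : R) : x%:C + y%:C = (x + y)%:C :> R[i].
Proof. by apply/eqP; rewrite eq_complex /= addr0 !eqxx. Qed.
Lemma RC1 (R : realType) : (1 : R)%:C = 1 :> R[i].
Proof. by []. Qed.

Section Star.
Variables (R : realType) (H : lmodType R[i]) (ip : H -> H -> R[i]).
Hypothesis hip : is_inner_product ip.
Variables (m : nat) (A : 'I_m -> H -> H).
Hypothesis hA : forall j : 'I_m, bounded_self_adjoint ip (A j).

Lemma range_comp (P : H -> H) (hP : orth_projection ip P) (a : 'I_m -> R)
  (hc : compresses_to A P a) j u w :
  P u = u -> P w = w -> ip (A j u) w = (a j)%:C * ip u w.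
Proof.
move=> hu hw; case: hP => [[_ hsa] _].
by rewrite -{1}hu -{1}hw -hsa hc (ipZl hip) hu.
Qed.

Lemma frameP (P : H -> H) (hP : orth_projection ip P) (N : nat) (v : 'I_N -> H)
  (hvi : lin_indep v) (hvr : forall i, exists y, v i = P y)
  (F : seq H) (k : nat) (hN : (size F + k <= N)%N) :
  exists x : nat -> H,
   [/\ forall s t, (s < k)%N -> (t < k)%N -> ip (x s) (x t) = (s == t)%:R,
     forall s, (s < k)%N -> P (x s) = x s &
     forall s w, (s < k)%N -> w \in F -> ip (x s) w = 0].
Proof.
case: hP => [[[hPl _] _] hPi].
have hv : forall n, (n < k)%N -> exists N' (v' : 'I_N' -> H),
    [/\ lin_indep v', (forall i, exists y, v' i = P y) &
       (size F + n * (if false then m.+1 else 1) < N')%N].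
  by move=> n hn; exists N, v; split => //; rewrite muln1; lia.
have [x [h1 h2 h3 _]] := @frame R H ip hip m A hA P hPl hPi false F k hv.
by exists x; split.
Qed.

Lemma star_part (a : 'I_m -> R) (P : H -> H) (hP : orth_projection ip P)
  (hPc : compresses_to A P a) (N : nat) (v0 : 'I_N -> H)
  (hvi0 : lin_indep v0) (hvr0 : forall i, exists y, v0 i = P y)
  (k : nat) (hN : (k * m.+2 <= N)%N) :
  star_center (Lambda_k ip A k) a.
Proof.
have hkN : (k <= N)%N by apply: leq_trans hN; rewrite leq_pmulr.
split.
  have [x [h1 h2 h3]] := frameP hP hvi0 hvr0 (F := [::]) hkN.
  apply: (@proj_lambda _ _ _ hip _ _ hA k x a h1) => j s t hs ht.
  by rewrite (range_comp hP hPc) ?h2 // h1 // mulrC.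
move=> b [Q [hQ hQr hQc]] r /andP[hr0 hr1].
have [[[hQl _] _] hQi] := hQ.
case: hQr => v [hvi hvr _].
have hvQ : forall n, (n < k)%N -> exists N (v' : 'I_N -> H),
    [/\ lin_indep v', (forall i, exists y, v' i = Q y) &
       (size ([::] : seq H) + n * (if false then m.+1 else 1) < N)%N].
  by move=> n hn; exists k, v; split => //=; rewrite add0n muln1.
have [q [hq1 hq2 _ _]] := @frame R H ip hip m A hA Q hQl hQi false [::] k hvQ.
set F := avoidset A true [::] q k.
have hFN : (size F + k <= N)%N by rewrite /F avoid_size /=; move: hN; rewrite mulnS; lia.
have [x [hx1 hx2 hx3]] := frameP hP hvi0 hvr0 hFN.
set al := Num.sqrt (1 - r); set be := Num.sqrt r.
have hal : al%:C * al%:C = (1 - r)%:C.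
  by rewrite RCM -expr2 sqr_sqrtr // subr_ge0.
have hbe : be%:C * be%:C = r%:C by rewrite RCM -expr2 sqr_sqrtr.
have hxq s t : (s < k)%N -> (t < k)%N -> ip (x s) (q t) = 0.
  by move=> hs ht; apply: hx3 => //; apply: avoid_memx.
have hqx s t : (s < k)%N -> (t < k)%N -> ip (q s) (x t) = 0.
  by move=> hs ht; rewrite (ipJ hip) hxq // conjc0.
have hxAq j s t : (s < k)%N -> (t < k)%N -> ip (A j (x s)) (q t) = 0.
  by move=> hs ht; rewrite (A_sa hA); apply: hx3 => //; apply: avoid_memA.
have hqAx j s t : (s < k)%N -> (t < k)%N -> ip (A j (q s)) (x t) = 0.
  by move=> hs ht; rewrite (ipJ hip) -(A_sa hA) hxAq // conjc0.
pose y n := al%:C *: x n + be%:C *: q n.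
apply: (@proj_lambda _ _ _ hip _ _ hA k y).
  move=> s t hs ht; rewrite /y (ipDl hip) !(ipDr hip) !(ipZl hip) !(ipZr_real hip).
  rewrite hxq // hqx // hx1 // hq1 // !mulr0 addr0 add0r !mulrA hal hbe.
  by rewrite -mulrDl RCD subrK RC1 mul1r.
move=> j s t hs ht; rewrite /y.
have hl := A_lin hA j.
rewrite (linD _ _ hl) !(linZ _ _ hl) (ipDl hip) !(ipDr hip) !(ipZl hip) !(ipZr_real hip).
rewrite hxAq // hqAx // !mulr0 addr0 add0r !mulrA hal hbe.
rewrite (range_comp hP hPc) ?hx2 // (range_comp hQ hQc) ?hq2 // hx1 // hq1 //.
by rewrite -[((1 - r) * a j + r * b j)%:C]RCD -!RCM; ring.
Qed.
End Star.


Section Comb.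
Variables (R : realType) (m : nat) (d : nat -> 'I_m -> R).

Definition good (t b : nat) (p : 'I_m -> R) (w : nat -> nat -> R) : Prop :=
 [/\ forall s n, 0 <= w s n,
     forall s n, w s n != 0 -> (b <= n)%N /\ (n < b + (m.+2) ^ t)%N,
     forall s s' n, s != s' -> (s < 2 ^ t)%N -> (s' < 2 ^ t)%N -> w s n * w s' n = 0,
     forall s M, (s < 2 ^ t)%N -> (b + (m.+2) ^ t <= M)%N -> \sum_(n < M) w s n = 1 &
     forall s M j, (s < 2 ^ t)%N -> (b + (m.+2) ^ t <= M)%N ->
        \sum_(n < M) w s n * d n j = p j].

Lemma sum_ind (M b : nat) (F : nat -> R) : (b < M)%N ->
  \sum_(n < M) (if (n : nat) == b then F n else 0) = F b.
Proof.
move=> hb; rewrite (bigD1 (Ordinal hb)) //= eqxx big1 ?addr0 // => n hn.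
have -> : ((n : nat) == b) = false.
  by apply/negbTE; move: hn; apply: contra => /eqP h; apply/eqP/val_inj.
done.
Qed.

Lemma good0 b : good 0 b (d b) (fun s n => if n == b then 1 else 0).
Proof.
split.
- by move=> s n; case: (n == b).
- move=> s n; case: (eqVneq n b) => [->|hnb]; last by rewrite eqxx.
  by rewrite expn0 addn1 leqnn ltnSn.
- move=> s s' n hss; rewrite expn0 !ltnS !leqn0 => /eqP hs /eqP hs'.
  by move: hss; rewrite hs hs' eqxx.
- move=> s M _; rewrite expn0 addn1 => hM.
  exact: (sum_ind (fun _ => 1) hM).
- move=> s M j _; rewrite expn0 addn1 => hM.
  rewrite -(sum_ind (fun n => d n j) hM); apply: eq_bigr => n _.
  by case: ifP; rewrite ?mul1r ?mul0r.
Qed.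

Lemma radon (p : 'I_m.+2 -> 'I_m -> R) : exists lam : 'I_m.+2 -> R,
  (exists i, lam i != 0) /\ \sum_i lam i = 0 /\ forall j, \sum_i lam i * p i j = 0.
Proof.
have [c [hc0 hc]] := kernel_exists
  (\matrix_(i < m.+2, j < m.+1) (if unlift ord_max j is Some j' then p i j' else 1))
  (ltnSn m.+1).
exists c; split => //; split.
  have := hc ord_max; under eq_bigr => i _ do rewrite mxE unlift_none mulr1.
  by [].
move=> j; have := hc (lift ord_max j); under eq_bigr => i _ do rewrite mxE liftK.
by [].
Qed.

Definition pos (x : R) := if 0 <= x then x else 0.
Definition neg (x : R) := if 0 <= x then 0 else - x.
Lemma pos_ge0 x : 0 <= pos x.
Proof. by rewrite /pos; case: ifP. Qed.
Lemma neg_ge0 x : 0 <= neg x.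
Proof. by rewrite /neg; case: ifP => // /negbT; rewrite -ltNge => h; lra. Qed.
Lemma posneg x : pos x - neg x = x.
Proof. by rewrite /pos /neg; case: ifP => _; rewrite ?subr0 ?sub0r ?opprK. Qed.
Lemma posnegM x : pos x * neg x = 0.
Proof. by rewrite /pos /neg; case: ifP => _; rewrite ?mulr0 ?mul0r. Qed.

Lemma comb t : forall b, exists pw : ('I_m -> R) * (nat -> nat -> R), good t b pw.1 pw.2.
Proof.
elim: t => [|t IH] b; first by exists (d b, fun s n => if n == b then 1 else 0); exact: good0.
set L := ((m.+2) ^ t)%N.
have [f hf] := boolp.choice (fun i : 'I_m.+2 => IH (b + i * L)%N).
pose p i := (f i).1; pose w i := (f i).2.
have hg (i : 'I_m.+2) : good t (b + i * L) (p i) (w i) := hf i.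
have [lam [[i0 hi0] [hl1 hl2]]] := radon p.
pose sig := \sum_i pos (lam i).
have hsn : \sum_i neg (lam i) = sig.
  apply/eqP; rewrite eq_sym -subr_eq0 -sumrB.
  by under eq_bigr => i _ do rewrite posneg; rewrite hl1.
have hsig : 0 < sig.
  rewrite lt_def sumr_ge0 ?andbT; last by move=> i _; exact: pos_ge0.
  apply/eqP => h0; move/eqP: hi0; apply.
  have h1 := psumr_eq0P (fun i _ => pos_ge0 (lam i)) h0.
  have h2 : \sum_i neg (lam i) = 0 by rewrite hsn.
  have h3 := psumr_eq0P (fun i _ => neg_ge0 (lam i)) h2.
  by rewrite -(posneg (lam i0)) h1 // h3 // subr0.
pose mup i := pos (lam i) / sig; pose mun i := neg (lam i) / sig.
have hmp : \sum_i mup i = 1 by rewrite -mulr_suml mulfV // gt_eqF.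
have hmn : \sum_i mun i = 1 by rewrite -mulr_suml hsn mulfV // gt_eqF.
pose q j := \sum_i mup i * p i j.
have hq j : \sum_i mun i * p i j = q j.
  have e : \sum_i pos (lam i) * p i j = \sum_i neg (lam i) * p i j.
    apply/eqP; rewrite -subr_eq0 -sumrB.
    by under eq_bigr => i _ do rewrite -mulrBl posneg; rewrite hl2.
  rewrite /q /mup /mun; under eq_bigr => i _ do rewrite mulrAC.
  rewrite -mulr_suml -e mulr_suml; apply: eq_bigr => i _; by rewrite mulrAC.
pose c s i := if (s < 2 ^ t)%N then mup i else mun i.
pose sh s := if (s < 2 ^ t)%N then s else (s - 2 ^ t)%N.
have hsh s : (s < 2 ^ t.+1)%N -> (sh s < 2 ^ t)%N.
  by rewrite /sh expnS; case: ifP => //; lia.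
have hc0 s i : 0 <= c s i.
  by rewrite /c; case: ifP => _; apply: divr_ge0; rewrite ?pos_ge0 ?neg_ge0 ?ltW.
have hcs s : \sum_i c s i = 1 by rewrite /c; case: (s < 2 ^ t)%N.
have hbnd (i : 'I_m.+2) : (b + i * L + L <= b + (m.+2) ^ t.+1)%N.
  have := leq_mul (ltn_ord i) (leqnn L); rewrite mulSn expnS -/L; lia.
have hblk (i i' : 'I_m.+2) s1 s2 n : w i s1 n != 0 -> w i' s2 n != 0 -> i = i'.
  move=> h1 h2; case: (hg i) => _ hs1 _ _ _; case: (hg i') => _ hs2 _ _ _.
  have [a1 a2] := hs1 _ _ h1; have [a3 a4] := hs2 _ _ h2.
  apply: val_inj; apply/eqP; case: (ltngtP i i') => // hii.
    have := leq_mul hii (leqnn L); rewrite mulSn -/L; lia.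
  have := leq_mul hii (leqnn L); rewrite mulSn -/L; lia.
pose W s n := \sum_(i < m.+2) c s i * w i (sh s) n.
exists (q, W); split => /=.
- move=> s n; apply: sumr_ge0 => i _; apply: mulr_ge0 => //.
  by case: (hg i) => + _ _ _ _; apply.
- move=> s n hW.
  have [i hi] : exists i, c s i * w i (sh s) n != 0.
    apply: contrapT => hn; move/eqP: hW; apply; apply: big1 => i _.
    by apply/eqP/negPn/negP => h; apply: hn; exists i.
  have hw : w i (sh s) n != 0 by apply: contraNneq hi => ->; rewrite mulr0.
  case: (hg i) => _ hs _ _ _; have [a1 a2] := hs _ _ hw.
  have := hbnd i; rewrite -/L; split; lia.
- move=> s s' n hss hs hs'.
  rewrite mulr_suml; apply: big1 => i _; rewrite mulr_sumr; apply: big1 => i' _.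
  have [hz|hnz] := eqVneq (w i (sh s) n) 0; first by rewrite hz mulr0 mul0r.
  have [hz'|hnz'] := eqVneq (w i' (sh s') n) 0; first by rewrite hz' !mulr0.
  have ei := hblk _ _ _ _ _ hnz hnz'; subst i'.
  rewrite mulrACA.
  have hpn : mup i * mun i = 0 by rewrite /mup /mun mulrACA posnegM mul0r.
  case: (hg i) => _ _ hd _ _.
  move: (hsh _ hs) (hsh _ hs'); rewrite /c /sh.
  case: ifP => h1; case: ifP => h2 => hh1 hh2.
  + by rewrite hd ?mulr0.
  + by rewrite hpn mul0r.
  + by rewrite [mun i * _]mulrC hpn mul0r.
  + rewrite hd ?mulr0 //; move: hss h1 h2 hs hs'; rewrite !expnS; lia.
- move=> s M hs hM.
  rewrite exchange_big /=; rewrite -[RHS](hcs s); apply: eq_bigr => i _.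
  rewrite -mulr_sumr; case: (hg i) => _ _ _ hsum _.
  rewrite hsum ?mulr1 //; first exact: hsh.
  by apply: leq_trans hM; rewrite -addnA leq_add2l; have := hbnd i; lia.
- move=> s M j hs hM.
  under eq_bigr => n _ do rewrite mulr_suml.
  rewrite exchange_big /=.
  have -> : \sum_(i < m.+2) \sum_(n < M) c s i * w i (sh s) n * d n j =
            \sum_(i < m.+2) c s i * p i j.
    apply: eq_bigr => i _; under eq_bigr => n _ do rewrite -mulrA.
    rewrite -mulr_sumr; case: (hg i) => _ _ _ _ hb.
    rewrite hb //; first exact: hsh.
    by apply: leq_trans hM; have := hbnd i; lia.
  by rewrite /c; case: (s < 2 ^ t)%N => //; exact: hq.
Qed.
End Comb.


Lemma RC_sum (R : realType) (I : Type) (r : seq I) (P : pred I) (F : I -> R) :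
  (\sum_(i <- r | P i) F i)%:C = \sum_(i <- r | P i) (F i)%:C :> R[i].
Proof. by elim/big_rec2: _ => // i y1 y2 _ <-; rewrite RCD. Qed.

Lemma selfconj_real (R : realType) (z : R[i]) : conjc z = z -> z = (complex.Re z)%:C.
Proof.
case: z => a b /= h; apply/eqP; rewrite eq_complex /= eqxx /=.
by move: h => [] h; apply/eqP; lra.
Qed.

Section NonEmpty.
Variables (R : realType) (H : lmodType R[i]) (ip : H -> H -> R[i]).
Hypothesis hip : is_inner_product ip.

Lemma comb_ip (x : nat -> H) (L : nat) (T : H -> H) (hT : is_linear_op T)
  (e : nat -> R) (hx : forall n n', (n < L)%N -> (n' < L)%N ->
       ip (T (x n)) (x n') = (n == n')%:R * (e n)%:C)
  (al be : nat -> R) :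
  ip (T (\sum_(n < L) (al n)%:C *: x n)) (\sum_(n < L) (be n)%:C *: x n) =
  (\sum_(n < L) al n * be n * e n)%:C.
Proof.
rewrite (lin_sum _ _ _ hT) (ip_suml hip) RC_sum; apply: eq_bigr => n _.
rewrite (linZ _ _ hT) (ipZl hip) (ip_sumr hip).
under eq_bigr => n' _ do rewrite (ipZr_real hip) hx // [(_ == _)%:R * _]mulrC mulrA eq_sym.
by rewrite (sum_delta (fun n' : 'I_L => (be n')%:C * (e n)%:C) n) !RCM mulrA.
Qed.

Variables (m : nat) (A : 'I_m -> H -> H).
Hypothesis hA : forall j : 'I_m, bounded_self_adjoint ip (A j).
Hypothesis hinf : infinite_dimensional H.

Lemma lambda_nonempty (K : nat) : exists c, Lambda_k ip A K c.
Proof.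
pose L := ((m.+2) ^ K)%N.
have hid : is_linear_op (fun x : H => x) by [].
have hv : forall n, (n < L)%N -> exists N (v : 'I_N -> H),
    [/\ lin_indep v, (forall i, exists y, v i = y) &
       (size ([::] : seq H) + n * (if true then m.+1 else 1) < N)%N].
  move=> n _; have [v hv] := hinf (n * m.+1).+1.
  by exists (n * m.+1).+1, v; split => // i; exists (v i).
have [x [h1 _ _ h4]] := @frame R H ip hip m A hA (fun x => x) hid (fun _ => erefl) true [::] L hv.
pose d n j := complex.Re (ip (A j (x n)) (x n)).
have hxA j n n' : (n < L)%N -> (n' < L)%N ->
    ip (A j (x n)) (x n') = (n == n')%:R * (d n j)%:C.
  move=> hn hn'; case: (eqVneq n n') => [<-|hnn].
    rewrite mul1r; apply: selfconj_real.
    by rewrite -(ipJ hip) (A_sa hA).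
  by rewrite mul0r (A_sa hA) h4.
have hxI n n' : (n < L)%N -> (n' < L)%N ->
    ip (x n) (x n') = (n == n')%:R * (1 : R)%:C.
  by move=> hn hn'; rewrite h1 // RC1 mulr1.
have [[p w] [hw0 _ hwd hw1 hwp]] := comb d K 0.
exists p.
have hK s : (s < K)%N -> (s < 2 ^ K)%N.
  by move=> hs; apply: ltn_trans hs (ltn_expl K (ltnSn 1)).
pose y s := \sum_(n < L) (Num.sqrt (w s n))%:C *: x n.
have hsq s t n : (s < K)%N -> (t < K)%N ->
    Num.sqrt (w s n) * Num.sqrt (w t n) = (s == t)%:R * w s n.
  move=> hs ht; case: (eqVneq s t) => [<-|hst].
    by rewrite mul1r -expr2 sqr_sqrtr.
  by rewrite mul0r -sqrtrM // hwd ?hK // sqrtr0.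
apply: (@proj_lambda _ _ _ hip _ _ hA K y p).
  move=> s t hs ht; have := comb_ip hid hxI (fun n => Num.sqrt (w s n)) (fun n => Num.sqrt (w t n)).
  move=> ->; under eq_bigr => n _ do rewrite hsq // mulr1.
  rewrite -mulr_sumr hw1 ?hK ?add0n // mulr1.
  by case: (s == t).
move=> j s t hs ht.
have := comb_ip (A_lin hA j) (hxA j) (fun n => Num.sqrt (w s n)) (fun n => Num.sqrt (w t n)).
move=> ->; under eq_bigr => n _ do rewrite hsq // -mulrA.
rewrite -mulr_sumr hwp ?hK ?add0n // -RCM.
by case: (s == t).
Qed.
End NonEmpty.

Unset Implicit Arguments.

Theorem proposition4p1 (R : realType) (H : lmodType R[i]) (ip : H -> H -> R[i])
  (hH : complex_hilbert_space ip) (hinf : infinite_dimensional H)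
  (m : nat) (A : 'I_m -> H -> H)
  (hA : forall j : 'I_m, bounded_self_adjoint ip (A j)) :
  (forall k : nat, (0 < k)%N -> star_shaped (Lambda_k ip A k)) /\
  (forall a : 'I_m -> R, Lambda_inf ip A a ->
     forall k : nat, (0 < k)%N -> star_center (Lambda_k ip A k) a).
Proof.
have hip : is_inner_product ip by case: hH.
split.
- move=> k _.
  have [c [P [hP [v [hvi hvr _]] hPc]]] := lambda_nonempty hip hA hinf (k * m.+2).
  exists c; exact: (star_part hip hA hP hPc hvi hvr (leqnn _)).
- move=> a [P [hP hPr hPc]] k _.
  have [v [hvi hvr]] := hPr (k * m.+2)%N.
  exact: (star_part hip hA hP hPc hvi hvr (leqnn _)).
Qed.
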